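(* Let $a\ge 0$, $\Delta t>0$, and let $z(\omega)$ be a real-valued function of the frequency $\omega$ with values in $[0,z_{\max}]$, where $z_{\max}=\max_\omega z(\omega)>0$. For each $\omega$ consider the quadratic $$(2+a\Delta t)^{2}\xi^{2}-4\big(2+a\Delta t-2\Delta t^{2}z(\omega)\big)\xi+(2-a\Delta t)\big(2+a\Delta t-2\Delta t^{2}z(\omega)\big)=0 .$$ If $$\Delta t\le\frac{2}{\sqrt{3\,z_{\max}}},$$ then both roots satisfy $|\xi|\le 1$ for every $\omega$.
   Context: This quadratic is the von Neumann characteristic equation of the semi-implicit (Nesterov-type) two-step scheme for $u_{tt}+au_t=-\nabla E$: $$v^{n}=u^{n}+\frac{2-a\Delta t}{2+a\Delta t}(u^{n}-u^{n-1}),\qquad u^{n+1}=v^{n}-\frac{2\Delta t^{2}}{2+a\Delta t}\nabla E(v^{n}),$$ obtained by linearizing $\nabla E$, writing the discrete Fourier transform of the linearized gradient of a grid function $w$ as $z(\omega)W(\omega)$ ($z$ the ''gradient amplifier''), and substituting $U^{n\pm m}=\xi^{\pm m}U^n$. *)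

(* Defs.v *)
(* roots of the quadratic may be complex, so we work in an
   arbitrary numeric algebraically closed field C (e.g. the complex numbers),
   with all parameters real (nonnegative / positive elements of C). *)
From HB Require Import structures.
From mathcomp Require Import all_boot all_order all_algebra.
Set Implicit Arguments. Unset Strict Implicit. Unset Printing Implicit Defensive.
Import Order.TTheory GRing.Theory Num.Theory.
Local Open Scope ring_scope.

Definition char_quad (C : numClosedFieldType) (a dt zw xi : C) : C :=
  (2 + a * dt) ^+ 2 * xi ^+ 2
  - 4 * (2 + a * dt - 2 * dt ^+ 2 * zw) * xi
  + (2 - a * dt) * (2 + a * dt - 2 * dt ^+ 2 * zw).

(* Main.v *)
Require Import Defs.
From HB Require Import structures.
From mathcomp Require Import all_boot all_order all_algebra.
From mathcomp Require Import ring.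
Import Order.TTheory GRing.Theory Num.Theory.
Local Open Scope ring_scope.
Ltac pos := repeat first [ done | apply: addr_ge0 | apply: mulr_ge0 | apply: exprn_ge0 | apply: ltW ].

Lemma key (C : numClosedFieldType) (S T x : C) : 0 <= S -> 0 <= T -> 3*T <= 4 ->
 (2+S)^+2 * x^+2 - 4*(2+S-2*T)*x + (2-S)*(2+S-2*T) = 0 -> `|x| <= 1.
Proof.
move=> hS hT hT4.
set L := (X in X = 0) => E.
have h43 : 0 <= 4 - 3*T by rewrite subr_ge0.
have hb : 0 < 2 + S by rewrite ltr_wpDr.
case: (boolP (x \is Num.real)) => xr.
  rewrite real_ler_norml //; apply/andP; split.
    rewrite real_leNgt ?realN ?real1 //; apply/negP => hx.
    set e := -1 - x.
    have he : 0 < e by rewrite /e subr_gt0.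
    have : 0 < 3 * L.
      have -> : 3 * L =
        3*(4*(4-3*T) + 8*S + 2*T*S) + e*(8*(4-3*T)+16 + 36*S+6*S^+2) + 3*(2+S)^+2*e^+2
        by rewrite /e /L; ring.
      clearbody e.
      apply: ltr_pwDr; first by rewrite !mulr_gt0 ?exprn_gt0.
      pos.
    by rewrite E mulr0 ltxx.
  rewrite real_leNgt ?real1 //; apply/negP => hx.
  set e := x - 1.
  have he : 0 < e by rewrite /e subr_gt0.
  have : 0 < L.
    have -> : L =
      (2+S)*(2*T) + e*(2*(2+S)*S + 8*T) + (2+S)^+2*e^+2
      by rewrite /e /L; ring.
      clearbody e.
    apply: ltr_pwDr; first by rewrite !mulr_gt0 ?exprn_gt0.
    pos.
  by rewrite E ltxx.
have Sc : S^* = S by rewrite conj_Creal // ger0_real.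
have Tc : T^* = T by rewrite conj_Creal // ger0_real.
have E' := congr1 Num.conj_op E.
rewrite /L in E E'.
rewrite !(rmorphD, rmorphB, rmorphN, rmorphM, rmorphXn, rmorph_nat, rmorph1, rmorph0) /= ?Sc ?Tc in E'.
have xc : x - x^* != 0 by rewrite subr_eq0 eq_sym -CrealE.
have : (x - x^*) * ((2+S)^+2 * (x + x^*) - 4*(2+S-2*T)) = 0.
  rewrite -(subrr 0) -{1}E -E'. ring.
move/eqP; rewrite mulf_eq0 (negbTE xc) /= subr_eq0 => /eqP H.
have H2 : (2+S)^+2 * `|x|^+2 = (2-S)*(2+S-2*T).
  rewrite normCK; apply/eqP; rewrite -subr_eq0 -oppr_eq0 -[X in _ == X]E; apply/eqP.
  have -> : 4 * (2 + S - 2 * T) * x = (2+S)^+2 * (x + x^*) * x by rewrite H.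
  ring.
rewrite -(expr_le1 (n:=2)) //.
rewrite -(ler_pM2l (exprn_gt0 2 hb)) H2 mulr1 -subr_ge0.
have -> : (2+S)^+2 - (2-S)*(2+S-2*T) = (2*S*(4-3*T) + 4 * S + 6 * S^+2 + 12 * T) / 3.
  by field.
by rewrite divr_ge0 //; pos.
Qed.

Theorem mainTheorem6 (C : numClosedFieldType) (Omega : Type)
  (a dt zmax : C) (z : Omega -> C)
  (ha : 0 <= a) (hdt : 0 < dt)
  (hz : forall w, 0 <= z w <= zmax)
  (hzmax : exists w0, z w0 = zmax)
  (hzpos : 0 < zmax)
  (hcfl : dt <= 2 / sqrtC (3 * zmax)) :
  forall (w : Omega) (xi : C), char_quad a dt (z w) xi = 0 -> `|xi| <= 1.
Proof.
move=> w xi E.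
have [hz0 hz1] := andP (hz w).
set r := sqrtC (3 * zmax).
have hr : 0 < r by rewrite /r sqrtC_gt0 mulr_gt0.
have h1 : dt * r <= 2 by rewrite -ler_pdivlMr.
have h2 : (dt * r) ^+ 2 <= 2 ^+ 2 by rewrite ler_pXn2r // ?nnegrE ?mulr_ge0 ?ltW.
rewrite exprMn /r sqrtCK in h2.
apply: (@key C (a * dt) (dt ^+ 2 * z w)).
- exact: mulr_ge0 ha (ltW hdt).
- exact: mulr_ge0 (exprn_ge0 2 (ltW hdt)) hz0.
- have h3 : 3 * (dt ^+ 2 * z w) <= dt ^+ 2 * (3 * zmax).
    have -> : dt ^+ 2 * (3 * zmax) = 3 * (dt ^+ 2 * zmax) by ring.
    by rewrite ler_pM2l // ler_pM2l // exprn_gt0.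
  apply: le_trans h3 _; apply: le_trans h2 _.
  by rewrite expr2 -natrM.
- by move: E; rewrite /char_quad; move=> <-; ring.
Qed.
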